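(* In the setting of the context, for each $A\ge1$ there exists $s_{03}(A)>1$ such that for all $s_0\ge s_{03}(A)$, writing $\psi=\psi_{s_0,d_0,d_1}$ (decomposed at time $s=s_0$): (i) there exists a rectangle $\mathcal D_{s_0}\subset[-2,2]^2$ such that the linear map $\Phi:(d_0,d_1)\mapsto(\psi_0,\psi_1)$ is one-to-one from $\mathcal D_{s_0}$ onto $\left[-\frac{A}{s_0^{2\beta+1}},\frac{A}{s_0^{2\beta+1}}\right]^2$, maps $\partial\mathcal D_{s_0}$ into $\partial\left(\left[-\frac{A}{s_0^{2\beta+1}},\frac{A}{s_0^{2\beta+1}}\right]^2\right)$, and has degree one on the boundary; (ii) for all $(d_0,d_1)\in\mathcal D_{s_0}$: $\psi_e\equiv0$, $|\psi_-(y)|<\frac1{s_0^\gamma}(1+|y|^3)$ for all $y\in\mathbb{R}$, $|\psi_0|\le\frac{A}{s_0^{2\beta+1}}$, $|\psi_1|\le\frac{A}{s_0^{2\beta+1}}$, $|\psi_2|<\frac1{s_0^{4\beta-1}}$ (in particular $\psi\in\vartheta_A(s_0)$); (iii) for all $(d_0,d_1)\in\mathcal D_{s_0}$: $\|\partial_y\psi\|_{L^\infty(\mathbb{R})}\le\frac{CA}{s_0^{2\beta+1}}\le\frac1{s_0^{\gamma-3\beta}}$ and $|\partial_y\psi_-(y)|\le\frac1{s_0^\gamma}(1+|y|^3)$ for all $y\in\mathbb{R}$, where $C>0$ depends only on $p,\mu,K$.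
   Context: Let $p>3$, $\mu>0$, $q=\frac{2p}{p+1}$, $\beta=\frac{p+1}{2(p-1)}$. Let $\rho(y)=e^{-y^2/4}/\sqrt{4\pi}$, $h_0=1,h_1=y,h_2=y^2-2$, $k_m=h_m/\int_{\mathbb{R}}h_m^2\rho$. Fix $\chi_0\in C^\infty([0,\infty),[0,1])$ nonincreasing, $\chi_0=1$ on $[0,1]$, support in $[0,2]$, a fixed constant $K\ge6$ (large, depending only on $p,\mu$), and $\chi(y,s)=\chi_0(|y|/(Ks^\beta))$. For $r\in L^\infty(\mathbb{R})$ and time $s$: $r_b=\chi(\cdot,s)r$, $r_e=(1-\chi(\cdot,s))r$, $r_m=\int r_bk_m\rho$ ($m=0,1,2$), $r_-=r_b-\sum_{m=0}^2r_mh_m$. Fix $\gamma$ with $3\beta<\gamma<\min(5\beta-1,2\beta+1)$. For $A\ge1$, $s\ge1$, $\vartheta_A(s)$ is the set of $r\in L^\infty(\mathbb{R})$ with $\|r_e\|_{L^\infty}\le A^2s^{-(\gamma-3\beta)}$, $\|r_-(y)/(1+|y|^3)\|_{L^\infty}\le As^{-\gamma}$, $|r_0|,|r_1|\le As^{-(2\beta+1)}$, $|r_2|\le\sqrt As^{-(4\beta-1)}$. For $A\ge1$, $s_0>1$, $d_0,d_1\in\mathbb{R}$: $\psi_{s_0,d_0,d_1}(y)=\frac{A}{s_0^{2\beta+1}}(d_0+d_1y)\chi(2y,s_0)$. *)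

(* Defs.v *)
From Stdlib Require Import Reals.
From Coquelicot Require Import Coquelicot.
Open Scope R_scope.

Definition beta (p : R) : R := (p + 1) / (2 * (p - 1)).

Definition rho (y : R) : R := exp (- (y ^ 2) / 4) / sqrt (4 * PI).

Definition integral_R (f : R -> R) : R :=
  RInt_gen f (Rbar_locally m_infty) (Rbar_locally p_infty).

(* Hermite-type polynomials h_0 = 1, h_1 = y, h_2 = y^2 - 2 (h_m = 0 for m > 2, unused) *)
Definition h (m : nat) (y : R) : R :=
  match m with
  | 0%nat => 1
  | 1%nat => y
  | 2%nat => y ^ 2 - 2
  | _ => 0
  end.

Definition k (m : nat) (y : R) : R :=
  h m y / integral_R (fun z => (h m z) ^ 2 * rho z).

Definition chi (chi0 : R -> R) (K p : R) (y s : R) : R :=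
  chi0 (Rabs y / (K * Rpower s (beta p))).

Definition r_b chi0 K p (s : R) (r : R -> R) (y : R) : R := chi chi0 K p y s * r y.
Definition r_e chi0 K p (s : R) (r : R -> R) (y : R) : R := (1 - chi chi0 K p y s) * r y.
Definition r_mode chi0 K p (s : R) (r : R -> R) (m : nat) : R :=
  integral_R (fun y => r_b chi0 K p s r y * k m y * rho y).
Definition r_minus chi0 K p (s : R) (r : R -> R) (y : R) : R :=
  r_b chi0 K p s r y
  - (r_mode chi0 K p s r 0 * h 0 y + r_mode chi0 K p s r 1 * h 1 y
     + r_mode chi0 K p s r 2 * h 2 y).

(* The shrinking set vartheta_A(s); L^infty norms written as pointwise sup bounds. *)
Definition in_vartheta chi0 K p (gamma A s : R) (r : R -> R) : Prop :=
  (forall y, Rabs (r_e chi0 K p s r y) <= A ^ 2 * Rpower s (- (gamma - 3 * beta p))) /\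
  (forall y, Rabs (r_minus chi0 K p s r y) / (1 + Rabs y ^ 3) <= A * Rpower s (- gamma)) /\
  Rabs (r_mode chi0 K p s r 0) <= A * Rpower s (- (2 * beta p + 1)) /\
  Rabs (r_mode chi0 K p s r 1) <= A * Rpower s (- (2 * beta p + 1)) /\
  Rabs (r_mode chi0 K p s r 2) <= sqrt A * Rpower s (- (4 * beta p - 1)).

Definition psi chi0 K p (A s0 d0 d1 : R) (y : R) : R :=
  A / Rpower s0 (2 * beta p + 1) * (d0 + d1 * y) * chi chi0 K p (2 * y) s0.

Definition Phi chi0 K p (A s0 : R) (d : R * R) : R * R :=
  (r_mode chi0 K p s0 (psi chi0 K p A s0 (fst d) (snd d)) 0,
   r_mode chi0 K p s0 (psi chi0 K p A s0 (fst d) (snd d)) 1).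

Definition in_rect (a0 b0 a1 b1 : R) (d : R * R) : Prop :=
  a0 <= fst d <= b0 /\ a1 <= snd d <= b1.
Definition on_rect_boundary (a0 b0 a1 b1 : R) (d : R * R) : Prop :=
  in_rect a0 b0 a1 b1 d /\
  (fst d = a0 \/ fst d = b0 \/ snd d = a1 \/ snd d = b1).

(* Degree of the linear map Phi on the boundary: for a linear bijection between
   rectangles mapping boundary to boundary, the degree is the sign of its
   determinant; "degree one" = positive determinant. *)
Definition linear2_det (F : R * R -> R * R) : R :=
  fst (F (1, 0)) * snd (F (0, 1)) - fst (F (0, 1)) * snd (F (1, 0)).

(* Main.v *)
Require Import Defs.
From Stdlib Require Import Reals Lra Lia Psatz FunctionalExtensionality.
From Coquelicot Require Import Coquelicot.
Open Scope R_scope.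

Lemma exp_cube x : 0 <= x -> (1 + x/3)^3 <= exp x.
Proof.
  intros Hx.
  replace x with (x/3 + x/3 + x/3) at 2 by field.
  rewrite !exp_plus.
  pose proof (exp_ineq1_le (x/3)) as H.
  assert (0 <= 1 + x/3) by lra.
  set (e := exp (x/3)) in *.
  assert (0 <= (1+x/3)*(1+x/3)) by nra.
  assert ((1+x/3)*(1+x/3) <= e*e) by nra.
  simpl. nra.
Qed.

Lemma gauss_bd y : (1+y^2)^3 * exp(-(y^2)/4) <= 1728.
Proof.
  assert (H0: 0 <= y^2/4) by nra.
  pose proof (exp_cube _ H0) as H.
  assert (Hp: 0 < exp (y^2/4)) by apply exp_pos.
  replace (-(y^2)/4) with (-(y^2/4)) by field.
  rewrite exp_Ropp.
  apply (Rmult_le_reg_r (exp (y^2/4))); auto.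
  rewrite Rmult_assoc, Rinv_l by lra. rewrite Rmult_1_r.
  assert ((1+y^2)^3 <= 1728 * (1 + y^2/4/3)^3).
  { replace (1728 * (1 + y^2/4/3)^3) with ((12 * (1 + y^2/4/3))^3) by ring.
    apply pow_incr. split; nra. }
  nra.
Qed.

Lemma sqrt4pi : 1 <= sqrt (4*PI).
Proof. rewrite <- sqrt_1. apply sqrt_le_1_alt. pose proof PI_RGT_0. pose proof PI_4. pose proof (PI2_3_2). lra. Qed.

Lemma rho_pos y : 0 < rho y.
Proof. unfold rho. apply Rdiv_lt_0_compat. apply exp_pos. pose proof sqrt4pi; lra. Qed.

Lemma rho_le_exp y : rho y <= exp (-(y^2)/4).
Proof. unfold rho. pose proof sqrt4pi. pose proof (exp_pos (-(y^2)/4)).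
  unfold Rdiv. rewrite <- (Rmult_1_r (exp _)) at 2. apply Rmult_le_compat_l; try lra.
  rewrite <- Rinv_1. apply Rinv_le_contravar; lra. Qed.

Lemma rho_bd y : (1+y^2)^3 * rho y <= 1728.
Proof. eapply Rle_trans; [|apply (gauss_bd y)]. apply Rmult_le_compat_l.
  apply pow_le; nra. apply rho_le_exp. Qed.

Lemma rho_even y : rho (-y) = rho y.
Proof. unfold rho. f_equal. f_equal. f_equal. ring. Qed.

Lemma rho_ex_derive y : ex_derive rho y.
Proof. unfold rho. auto_derive. auto. Qed.

Lemma rho_cont y : continuous rho y.
Proof. apply (@ex_derive_continuous R_AbsRing R_NormedModule), rho_ex_derive. Qed.

Lemma RInt_abs_bound (f g : R -> R) a b : a <= b -> ex_RInt f a b -> ex_RInt g a b ->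
  (forall x, a <= x <= b -> Rabs (f x) <= g x) -> Rabs (RInt f a b) <= RInt g a b.
Proof.
  intros Hab Hf Hg H.
  apply Rabs_le. split.
  - assert (E: RInt (fun x => - g x) a b = - RInt g a b).
    { apply is_RInt_unique. apply (is_RInt_opp g). apply (@RInt_correct R_CompleteNormedModule g a b Hg). }
    assert (RInt (fun x => - g x) a b <= RInt f a b).
    { apply RInt_le; auto. eexists; apply (is_RInt_opp g); apply (@RInt_correct R_CompleteNormedModule g a b Hg).
      intros x Hx.
      specialize (H x ltac:(lra)). apply Rabs_le_between in H. lra. }
    lra.
  - apply RInt_le; auto. intros x Hx. specialize (H x ltac:(lra)).
    apply Rabs_le_between in H; lra.
Qed.

Lemma atan_RInt a b : is_RInt (fun y => / (1 + y^2)) a b (atan b - atan a).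
Proof.
  apply (is_RInt_derive atan (fun y => / (1 + y^2))).
  - intros x _. apply is_derive_Reals. apply derivable_pt_lim_atan.
  - intros x _. apply (@ex_derive_continuous R_AbsRing R_NormedModule (fun y => / (1 + y^2))).
    auto_derive. nra.
Qed.

Lemma cauchy_int_bd c a b : 0 <= c -> a <= b ->
  RInt (fun y => c * / (1 + y^2)) a b <= c * PI.
Proof.
  intros Hc Hab.
  assert (E: RInt (fun y => c * / (1 + y^2)) a b = c * (atan b - atan a)).
  { apply is_RInt_unique. apply (is_RInt_scal _ _ _ c _ (atan_RInt a b)). }
  rewrite E. apply Rmult_le_compat_l; auto.
  pose proof (atan_bound a); pose proof (atan_bound b); lra.
Qed.

Lemma cauchy_ex c a b : ex_RInt (fun y => c * / (1 + y^2)) a b.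
Proof. eexists. apply (is_RInt_scal _ _ _ c _ (atan_RInt a b)). Qed.

Lemma exc (f : R -> R) a b : (forall y, continuous f y) -> ex_RInt f a b.
Proof. intros H. apply (@ex_RInt_continuous R_CompleteNormedModule). intros; apply H. Qed.

Lemma RInt_mono_int (f : R -> R) a' a b b' : (forall y, continuous f y) -> (forall y, 0 <= f y) ->
  a' <= a -> a <= b -> b <= b' -> RInt f a b <= RInt f a' b'.
Proof.
  intros Hc Hp H1 H2 H3.
  rewrite <- (RInt_Chasles f a' a b') by (apply exc; auto).
  rewrite <- (RInt_Chasles f a b b') by (apply exc; auto).
  assert (0 <= RInt f a' a) by (apply RInt_ge_0; auto; apply exc; auto).
  assert (0 <= RInt f b b') by (apply RInt_ge_0; auto; apply exc; auto).
  simpl. unfold plus; simpl. lra.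
Qed.

Lemma gen_limit (f : R -> R) c : (forall y, continuous f y) -> (forall y, 0 <= f y) ->
  (forall a b, a <= b -> RInt f a b <= c) ->
  exists l, is_RInt_gen f (Rbar_locally m_infty) (Rbar_locally p_infty) l /\
   (forall b, 0 <= b -> RInt f (-b) b <= l) /\
   (forall eps, 0 < eps -> exists N, 0 <= N /\ forall b, N <= b -> l - eps < RInt f (-b) b).
Proof.
  intros Hc Hp Hb.
  set (E := fun x => exists b, 0 <= b /\ x = RInt f (-b) b).
  destruct (completeness E) as [m [Hub Hlub]].
  { exists c. intros x [b [Hb0 ->]]. apply Hb. lra. }
  { exists (RInt f (-0) 0). exists 0. split; auto; lra. }
  assert (UB: forall b, 0 <= b -> RInt f (-b) b <= m).
  { intros b Hb0. apply Hub. exists b; auto. }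
  assert (AP: forall eps, 0 < eps -> exists N, 0 <= N /\ forall b, N <= b -> m - eps < RInt f (-b) b).
  { intros eps He.
    destruct (Rlt_or_le (m - eps) m) as [_|]; [|lra].
    apply Classical_Prop.NNPP. intros Hn.
    assert (m <= m - eps); [|lra].
    apply Hlub. intros x [b [Hb0 ->]].
    apply Rnot_lt_le. intros Hlt. apply Hn. exists b. split; auto.
    intros b' Hb'. eapply Rlt_le_trans; [apply Hlt|].
    apply RInt_mono_int; auto; lra. }
  exists m. split; [|split; auto].
  unfold is_RInt_gen, filterlimi, filter_le, filtermapi.
  intros P [eps HP].
  destruct (AP eps (cond_pos eps)) as [N [HN0 HN]].
  apply (Filter_prod _ _ _ (fun x => x < -N) (fun y => N < y)).
  - exists (-N). auto.
  - exists N. auto.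
  - intros x y Hx Hy. simpl. exists (RInt f x y). split.
    + apply (@RInt_correct R_CompleteNormedModule). apply exc; auto.
    + apply HP. unfold ball; simpl. unfold AbsRing_ball; simpl. unfold abs, minus, plus, opp; simpl.
      set (B := Rmax (-x) y).
      assert (RInt f x y <= RInt f (-B) B).
      { apply RInt_mono_int; auto; unfold B; [pose proof (Rmax_l (-x) y)| lra |pose proof (Rmax_r (-x) y)]; lra. }
      assert (RInt f (-N) N <= RInt f x y) by (apply RInt_mono_int; auto; lra).
      assert (RInt f (-B) B <= m) by (apply UB; unfold B; pose proof (Rmax_r (-x) y); lra).
      specialize (HN N (Rle_refl _)).
      apply Rabs_def1; lra.
Qed.


Definition chiOK (chi0 : R -> R) : Prop :=
  (forall n t, 0 < t -> ex_derive_n chi0 n t) /\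
  (forall t, 0 <= t -> 0 <= chi0 t <= 1) /\
  (forall t, 0 <= t <= 1 -> chi0 t = 1) /\
  (forall t, 2 < t -> chi0 t = 0).

Definition cut (chi0 : R -> R) (L y : R) : R := chi0 (Rabs y / L).

Lemma ball_R (x e y : R) : ball x e y <-> Rabs (y - x) < e.
Proof. reflexivity. Qed.

Lemma chi0_exd chi0 t : chiOK chi0 -> 0 < t -> ex_derive chi0 t.
Proof. intros [H _] Ht. exact (H 1%nat t Ht). Qed.

Lemma dchi0_zero chi0 t : chiOK chi0 -> 0 < t -> (t < 1 \/ 2 < t) -> Derive chi0 t = 0.
Proof.
  intros Hc Ht Hcase. destruct Hc as [_ [_ [H1 H2]]].
  apply is_derive_unique.
  destruct Hcase as [Hl|Hl].
  - apply (is_derive_ext_loc (fun _ => 1)).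
    + assert (He: 0 < Rmin t (1 - t)) by (apply Rmin_pos; lra).
      exists (mkposreal _ He). intros y Hy. apply ball_R in Hy. simpl in Hy.
      pose proof (Rmin_l t (1-t)); pose proof (Rmin_r t (1-t)).
      symmetry; apply H1. apply Rabs_lt_between' in Hy. lra.
    + apply (@is_derive_const R_AbsRing R_NormedModule).
  - apply (is_derive_ext_loc (fun _ => 0)).
    + assert (He: 0 < t - 2) by lra.
      exists (mkposreal _ He). intros y Hy. apply ball_R in Hy. simpl in Hy.
      symmetry; apply H2. apply Rabs_lt_between' in Hy. lra.
    + apply (@is_derive_const R_AbsRing R_NormedModule).
Qed.

Lemma dchi0_bd chi0 : chiOK chi0 -> exists Bd, 0 <= Bd /\ forall t, 0 < t -> Rabs (Derive chi0 t) <= Bd.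
Proof.
  intros Hc.
  destruct (continuity_ab_maj (fun t => Rabs (Derive chi0 t)) 1 2) as [x [Hx Hx12]].
  - lra.
  - intros c Hc12. apply continuity_pt_filterlim.
    apply (continuous_comp (Derive chi0) Rabs).
    + apply (@ex_derive_continuous R_AbsRing R_NormedModule).
      destruct Hc as [H _]. exact (H 2%nat c ltac:(lra)).
    + apply continuous_Rabs.
  - exists (Rabs (Derive chi0 x)). split; [apply Rabs_pos|].
    intros t Ht. destruct (Rle_or_lt 1 t); [destruct (Rle_or_lt t 2)|].
    + apply Hx; lra.
    + rewrite dchi0_zero; auto. rewrite Rabs_R0; apply Rabs_pos.
    + rewrite dchi0_zero; auto. rewrite Rabs_R0; apply Rabs_pos.
Qed.


Lemma cut_bounds chi0 L y : chiOK chi0 -> 0 < L -> 0 <= cut chi0 L y <= 1.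
Proof. intros [_ [H _]] HL. unfold cut. apply H. apply Rdiv_le_0_compat; auto. apply Rabs_pos. Qed.

Lemma cut_one chi0 L y : chiOK chi0 -> 0 < L -> Rabs y <= L -> cut chi0 L y = 1.
Proof. intros [_ [_ [H _]]] HL Hy. unfold cut. apply H. split.
  apply Rdiv_le_0_compat; auto. apply Rabs_pos.
  apply (Rmult_le_reg_r L); auto. unfold Rdiv. rewrite Rmult_assoc, Rinv_l; lra. Qed.

Lemma cut_zero chi0 L y : chiOK chi0 -> 0 < L -> 2 * L < Rabs y -> cut chi0 L y = 0.
Proof. intros [_ [_ [_ H]]] HL Hy. unfold cut. apply H.
  apply (Rmult_lt_reg_r L); auto. unfold Rdiv. rewrite Rmult_assoc, Rinv_l; lra. Qed.

Lemma cut_even chi0 L y : cut chi0 L (-y) = cut chi0 L y.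
Proof. unfold cut. rewrite Rabs_Ropp. auto. Qed.

Lemma cut_deriv chi0 L Bd : chiOK chi0 -> 0 < L -> 0 <= Bd ->
  (forall t, 0 < t -> Rabs (Derive chi0 t) <= Bd) ->
  forall y, exists d, is_derive (cut chi0 L) y d /\ Rabs d <= Bd / L /\
     (2 * L < Rabs y -> d = 0).
Proof.
  intros Hc HL HBd HB y.
  assert (HLi: 0 < / L) by (apply Rinv_0_lt_compat; auto).
  destruct (Rtotal_order y 0) as [Hy|[Hy|Hy]].
  - exists (- / L * Derive chi0 (-y / L)). split; [|split].
    + apply (is_derive_ext_loc (fun t => chi0 (-t / L))).
      * assert (He: 0 < -y) by lra. exists (mkposreal _ He). intros t Ht.
        apply ball_R in Ht. simpl in Ht. apply Rabs_lt_between' in Ht.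
        unfold cut. rewrite Rabs_left by lra. auto.
      * apply (is_derive_comp chi0 (fun t => - t / L)).
        -- apply Derive_correct. apply chi0_exd; auto. apply Rdiv_lt_0_compat; lra.
        -- apply is_derive_Reals. replace (- / L) with ((-1) * / L) by ring.
           unfold Rdiv. apply derivable_pt_lim_scal_right. apply derivable_pt_lim_opp. apply derivable_pt_lim_id.
    + rewrite Rabs_mult, Rabs_Ropp, Rabs_right by lra. unfold Rdiv. rewrite Rmult_comm.
      apply Rmult_le_compat_r; [lra|]. apply HB. apply Rdiv_lt_0_compat; lra.
    + intros Hy2. assert (Hz: 2 < -y/L).
      { rewrite Rabs_left in Hy2 by lra. apply (Rmult_lt_reg_r L); auto. unfold Rdiv.
        rewrite Rmult_assoc, Rinv_l; lra. }
      rewrite (dchi0_zero chi0 (-y/L) Hc) by lra. apply Rmult_0_r.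
  - exists 0. split; [|split].
    + apply (is_derive_ext_loc (fun t => 1)).
      * exists (mkposreal _ HL). intros t Ht.
        apply ball_R in Ht. simpl in Ht. subst y. assert (Ht2 : Rabs (t - 0) < L) by exact Ht. rewrite Rminus_0_r in Ht2.
        symmetry. apply cut_one; auto. lra.
      * apply (@is_derive_const R_AbsRing R_NormedModule).
    + rewrite Rabs_R0. apply Rdiv_le_0_compat; auto.
    + auto.
  - exists (/ L * Derive chi0 (y / L)). split; [|split].
    + apply (is_derive_ext_loc (fun t => chi0 (t / L))).
      * exists (mkposreal _ Hy). intros t Ht.
        apply ball_R in Ht. simpl in Ht. apply Rabs_lt_between' in Ht.
        unfold cut. rewrite Rabs_right by lra. auto.
      * apply (is_derive_comp chi0 (fun t => t / L)).
        -- apply Derive_correct. apply chi0_exd; auto. apply Rdiv_lt_0_compat; lra.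
        -- auto_derive; [auto| field; lra].
    + rewrite Rabs_mult, Rabs_right by lra. unfold Rdiv. rewrite Rmult_comm.
      apply Rmult_le_compat_r; [lra|]. apply HB. apply Rdiv_lt_0_compat; lra.
    + intros Hy2. assert (Hz: 2 < y/L).
      { rewrite Rabs_right in Hy2 by lra. apply (Rmult_lt_reg_r L); auto. unfold Rdiv.
        rewrite Rmult_assoc, Rinv_l; lra. }
      rewrite (dchi0_zero chi0 (y/L) Hc) by lra. apply Rmult_0_r.
Qed.

Lemma cut_cont chi0 L y : chiOK chi0 -> 0 < L -> continuous (cut chi0 L) y.
Proof.
  intros Hc HL. destruct (dchi0_bd chi0 Hc) as [Bd [HB0 HB]].
  destruct (cut_deriv chi0 L Bd Hc HL HB0 HB y) as [d [Hd _]].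
  apply (@ex_derive_continuous R_AbsRing R_NormedModule). exists d; auto.
Qed.

Lemma cmul (f g : R -> R) y : continuous f y -> continuous g y -> continuous (fun y => f y * g y) y.
Proof. intros. apply (@continuous_mult R_UniformSpace R_AbsRing f g y); auto. Qed.
Lemma cplus (f g : R -> R) y : continuous f y -> continuous g y -> continuous (fun y => f y + g y) y.
Proof. intros. apply (@continuous_plus R_UniformSpace R_AbsRing R_NormedModule f g y); auto. Qed.
Lemma cconst (c : R) y : continuous (fun _ : R => c) y.
Proof. apply (@continuous_const R_UniformSpace R_UniformSpace). Qed.
Lemma cexd (f : R -> R) y : ex_derive f y -> continuous f y.
Proof. apply (@ex_derive_continuous R_AbsRing R_NormedModule). Qed.

Lemma compact_int (g : R -> R) L : 0 < L -> (forall y, continuous g y) ->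
  (forall y, L < Rabs y -> g y = 0) -> integral_R g = RInt g (-L) L.
Proof.
  intros HL Hc Hz. unfold integral_R. apply is_RInt_gen_unique.
  unfold is_RInt_gen, filterlimi, filter_le, filtermapi.
  intros P HP.
  apply (Filter_prod _ _ _ (fun x => x < -L) (fun y => L < y)).
  - exists (-L). auto.
  - exists L. auto.
  - intros x y Hx Hy. simpl. exists (RInt g (-L) L). split.
    + assert (E: RInt g x y = RInt g (-L) L).
      { rewrite <- (RInt_Chasles g x (-L) y) by (apply exc; auto).
        rewrite <- (RInt_Chasles g (-L) L y) by (apply exc; auto).
        rewrite (RInt_ext g (fun _ => 0) x (-L)).
        2:{ intros t Ht. rewrite Rmin_left in Ht by lra. rewrite Rmax_right in Ht by lra.
            apply Hz. rewrite Rabs_left; lra. }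
        rewrite (RInt_ext g (fun _ => 0) L y).
        2:{ intros t Ht. rewrite Rmin_left in Ht by lra. rewrite Rmax_right in Ht by lra.
            apply Hz. rewrite Rabs_right; lra. }
        rewrite !RInt_const. simpl. unfold plus, scal; simpl. unfold mult; simpl. ring. }
      rewrite <- E. apply (@RInt_correct R_CompleteNormedModule). apply exc; auto.
    + apply locally_singleton; auto.
Qed.

Lemma odd_int (g : R -> R) L : (forall y, continuous g y) -> (forall y, g (-y) = - g y) ->
  RInt g (-L) L = 0.
Proof.
  intros Hc Ho.
  assert (H1: is_RInt g (- - L) (- L) (RInt g L (-L))).
  { rewrite Ropp_involutive. apply (@RInt_correct R_CompleteNormedModule). apply exc; auto. }
  apply (is_RInt_comp_opp g (-L) L) in H1.
  apply (@is_RInt_unique R_CompleteNormedModule) in H1.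
  rewrite (RInt_ext _ g) in H1.
  2:{ intros x _. unfold opp; simpl. rewrite Ho. ring. }
  rewrite <- (opp_RInt_swap g (-L) L) in H1 by (apply exc; auto).
  unfold opp in H1; simpl in H1. lra.
Qed.


Definition chi2 chi0 L y := cut chi0 L (2 * y).
Definition Dm (m : nat) := integral_R (fun z => (h m z)^2 * rho z).
Definition Imod chi0 L (m j : nat) : R := RInt (fun y => y^j * chi2 chi0 L y * h m y * rho y) (-L) L.

Lemma chi2_cont chi0 L y : chiOK chi0 -> 0 < L -> continuous (chi2 chi0 L) y.
Proof.
  intros Hc HL. unfold chi2.
  apply (@continuous_comp R_UniformSpace R_UniformSpace R_UniformSpace (fun y => 2 * y) (cut chi0 L)).
  - apply cexd. auto_derive. auto.
  - apply cut_cont; auto.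
Qed.

Lemma chi2_zero chi0 L y : chiOK chi0 -> 0 < L -> L < Rabs y -> chi2 chi0 L y = 0.
Proof. intros Hc HL Hy. unfold chi2. apply cut_zero; auto. rewrite Rabs_mult, Rabs_right by lra. lra. Qed.

Lemma chi2_one chi0 L y : chiOK chi0 -> 0 < L -> Rabs y <= L / 2 -> chi2 chi0 L y = 1.
Proof. intros Hc HL Hy. unfold chi2. apply cut_one; auto. rewrite Rabs_mult, Rabs_right by lra. lra. Qed.

Lemma chi2_bnd chi0 L y : chiOK chi0 -> 0 < L -> 0 <= chi2 chi0 L y <= 1.
Proof. intros. unfold chi2. apply cut_bounds; auto. Qed.

Lemma chi2_even chi0 L y : chi2 chi0 L (-y) = chi2 chi0 L y.
Proof. unfold chi2. rewrite <- cut_even. f_equal. ring. Qed.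

Lemma h_exd m y : ex_derive (h m) y.
Proof. destruct m as [|[|[|m]]]; [simpl; apply ex_derive_const|simpl; apply ex_derive_id| |simpl; apply ex_derive_const]. unfold h. auto_derive. auto. Qed.

Lemma h_cont m y : continuous (h m) y.
Proof. apply cexd, h_exd. Qed.

Lemma psi_eq chi0 K p A s0 d0 d1 y :
  psi chi0 K p A s0 d0 d1 y =
  A / Rpower s0 (2 * beta p + 1) * (d0 + d1 * y) * chi2 chi0 (K * Rpower s0 (beta p)) y.
Proof. reflexivity. Qed.

Lemma chi_eq chi0 K p y s0 : chi chi0 K p y s0 = cut chi0 (K * Rpower s0 (beta p)) y.
Proof. reflexivity. Qed.

Lemma rb_eq chi0 K p A s0 d0 d1 : chiOK chi0 -> 0 < K * Rpower s0 (beta p) ->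
  r_b chi0 K p s0 (psi chi0 K p A s0 d0 d1) = psi chi0 K p A s0 d0 d1.
Proof.
  intros Hc HL. apply functional_extensionality. intros y. unfold r_b.
  rewrite chi_eq, psi_eq.
  destruct (Rle_or_lt (Rabs y) (K * Rpower s0 (beta p))).
  - rewrite cut_one; auto. ring.
  - rewrite chi2_zero; auto. ring.
Qed.

Lemma re_zero chi0 K p A s0 d0 d1 y : chiOK chi0 -> 0 < K * Rpower s0 (beta p) ->
  r_e chi0 K p s0 (psi chi0 K p A s0 d0 d1) y = 0.
Proof.
  intros Hc HL. unfold r_e.
  rewrite chi_eq, psi_eq.
  destruct (Rle_or_lt (Rabs y) (K * Rpower s0 (beta p))).
  - rewrite cut_one; auto. ring.
  - rewrite chi2_zero; auto. ring.
Qed.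

Lemma RInt_lin (f g : R -> R) a b u v : ex_RInt f a b -> ex_RInt g a b ->
  RInt (fun y => u * f y + v * g y) a b = u * RInt f a b + v * RInt g a b.
Proof.
  intros Hf Hg. apply is_RInt_unique.
  apply (is_RInt_plus (fun y => u * f y) (fun y => v * g y)).
  - apply (is_RInt_scal f a b u). apply (@RInt_correct R_CompleteNormedModule); auto.
  - apply (is_RInt_scal g a b v). apply (@RInt_correct R_CompleteNormedModule); auto.
Qed.

Lemma mode_formula chi0 K p A s0 d0 d1 m : chiOK chi0 -> 0 < K * Rpower s0 (beta p) ->
  r_mode chi0 K p s0 (psi chi0 K p A s0 d0 d1) m =
  A / Rpower s0 (2 * beta p + 1) * / Dm m *
   (d0 * Imod chi0 (K * Rpower s0 (beta p)) m 0 + d1 * Imod chi0 (K * Rpower s0 (beta p)) m 1).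
Proof.
  intros Hc HL. set (L := K * Rpower s0 (beta p)) in *.
  set (M := A / Rpower s0 (2 * beta p + 1)).
  unfold r_mode. rewrite rb_eq by auto.
  assert (Hg: forall j y, continuous (fun y => y^j * chi2 chi0 L y * h m y * rho y) y).
  { intros j y. apply cmul; [apply cmul; [apply cmul|]|].
    - apply cexd. auto_derive. auto.
    - apply chi2_cont; auto.
    - apply h_cont.
    - apply rho_cont. }
  rewrite (compact_int _ L HL).
  - unfold Imod.
    transitivity ((M * / Dm m * d0) * RInt (fun y => y^0 * chi2 chi0 L y * h m y * rho y) (-L) L
      + (M * / Dm m * d1) * RInt (fun y => y^1 * chi2 chi0 L y * h m y * rho y) (-L) L); [|ring].
    rewrite <- RInt_lin by (apply exc; auto).
    apply RInt_ext. intros y _. rewrite psi_eq. fold L M. unfold k. fold (Dm m).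
    simpl. unfold Rdiv. ring.
  - intros y. unfold k. apply cmul; [apply cmul|].
    + apply (continuous_ext (fun y => M * (d0 + d1 * y) * chi2 chi0 L y)).
      { intros; rewrite psi_eq; auto. }
      apply cmul. apply cexd; auto_derive; auto. apply chi2_cont; auto.
    + apply cmul. apply h_cont. apply cconst.
    + apply rho_cont.
  - intros y Hy. rewrite psi_eq. fold L. rewrite chi2_zero; auto. ring.
Qed.

Lemma Im_cont chi0 L m j y : chiOK chi0 -> 0 < L ->
  continuous (fun y => y^j * chi2 chi0 L y * h m y * rho y) y.
Proof.
  intros Hc HL. apply cmul; [apply cmul; [apply cmul|]|].
  - apply cexd. auto_derive. auto.
  - apply chi2_cont; auto.
  - apply h_cont.
  - apply rho_cont.
Qed.

Lemma I01 chi0 L : chiOK chi0 -> 0 < L -> Imod chi0 L 0 1 = 0.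
Proof.
  intros Hc HL. unfold Imod. apply odd_int.
  - intros; apply Im_cont; auto.
  - intros y. rewrite chi2_even, rho_even. simpl. ring.
Qed.

Lemma I10 chi0 L : chiOK chi0 -> 0 < L -> Imod chi0 L 1 0 = 0.
Proof.
  intros Hc HL. unfold Imod. apply odd_int.
  - intros; apply Im_cont; auto.
  - intros y. rewrite chi2_even, rho_even. simpl. ring.
Qed.

Lemma I2_bd chi0 L j : chiOK chi0 -> 0 < L -> (j <= 1)%nat -> Rabs (Imod chi0 L 2 j) <= 3456 * PI.
Proof.
  intros Hc HL Hj. unfold Imod.
  eapply Rle_trans; [apply (RInt_abs_bound _ (fun y => 3456 * / (1 + y^2)))|].
  - lra.
  - apply exc. intros; apply Im_cont; auto.
  - apply cauchy_ex.
  - intros y _.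
    pose proof (rho_bd y) as Hr. pose proof (rho_pos y) as Hp.
    pose proof (chi2_bnd chi0 L y Hc HL) as Hb.
    set (u := 1 + y^2) in *. assert (Hu: 1 <= u) by (unfold u; nra).
    assert (Hj': Rabs (y^j) <= u).
    { destruct j as [|[|j]]; simpl; [rewrite Rabs_R1; lra| |lia].
      rewrite Rmult_1_r. unfold u.
      assert (E2: Rabs y * Rabs y = y^2) by (rewrite <- Rabs_mult; rewrite Rabs_right; nra).
      pose proof (Rabs_pos y). nra. }
    assert (H2: Rabs (h 2 y) <= 2 * u).
    { simpl. unfold u. apply Rabs_le. nra. }
    apply (Rmult_le_reg_r u); [lra|]. replace (3456 * / u * u) with 3456 by (field; lra).
    rewrite !Rabs_mult, (Rabs_right (chi2 _ _ _)), (Rabs_right (rho y)) by lra.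
    assert (E: u ^ 3 = u * u * u) by ring. rewrite E in Hr.
    pose proof (Rabs_pos (y^j)). pose proof (Rabs_pos (h 2 y)).
    assert (Rabs (y^j) * chi2 chi0 L y <= u) by nra.
    assert (Rabs (y^j) * chi2 chi0 L y * Rabs (h 2 y) <= u * (2*u)).
    { apply Rmult_le_compat; nra. }
    set (P := Rabs (y^j) * chi2 chi0 L y * Rabs (h 2 y)) in *.
    assert (P * (rho y * u) <= (u * (2*u)) * (rho y * u)) by (apply Rmult_le_compat_r; nra).
    nra.
  - apply cauchy_int_bd; lra.
Qed.

Lemma rho_mono y : 1 <= y <= 2 -> rho 2 <= rho y.
Proof.
  intros Hy. unfold rho. unfold Rdiv. apply Rmult_le_compat_r.
  - pose proof sqrt4pi. left. apply Rinv_0_lt_compat. lra.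
  - destruct (Req_dec y 2) as [->|Hne]; [lra|].
    left. apply exp_increasing. nra.
Qed.

Lemma fm_cont m y : continuous (fun z => h m z ^ 2 * rho z) y.
Proof. apply cmul. apply cexd. destruct m as [|[|[|m]]]; unfold h; auto_derive; auto. apply rho_cont. Qed.

Lemma D_facts m : (m <= 1)%nat -> 0 < Dm m /\
  exists N, 0 <= N /\ forall b, N <= b -> Dm m / 2 < RInt (fun z => h m z ^ 2 * rho z) (-b) b.
Proof.
  intros Hm.
  set (f := fun z => h m z ^ 2 * rho z).
  assert (Hfb: forall y, f y <= 1728 * / (1 + y^2)).
  { intros y. unfold f. pose proof (rho_bd y). pose proof (rho_pos y).
    apply (Rmult_le_reg_r (1 + y^2)); [nra|]. replace (1728 * / (1 + y^2) * (1 + y^2)) with 1728 by (field; nra).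
    destruct m as [|[|m]]; [| |lia]; simpl.
    - assert (1 <= (1+y^2)) by nra.
      assert ((1+y^2) <= (1+y^2)*((1+y^2)*((1+y^2)*1))) by nra. nra.
    - assert (1 <= (1+y^2)) by nra.
      assert ((1+y^2)*(1+y^2) <= (1+y^2)*((1+y^2)*((1+y^2)*1))) by nra. nra. }
  assert (Hf0: forall y, 0 <= f y).
  { intros y. unfold f. pose proof (rho_pos y). assert (0 <= h m y ^ 2) by (apply pow2_ge_0). nra. }
  destruct (gen_limit f (1728 * PI)) as [l [Hl [Hub Happ]]].
  - intros; apply fm_cont.
  - auto.
  - intros a b Hab. eapply Rle_trans; [apply RInt_le|].
    + exact Hab.
    + apply exc. intros; apply fm_cont.
    + apply cauchy_ex.
    + intros x _. apply Hfb.
    + apply cauchy_int_bd; lra.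
  - assert (HD: Dm m = l).
    { unfold Dm, integral_R. apply is_RInt_gen_unique. exact Hl. }
    rewrite HD.
    assert (Hpos: 0 < l).
    { assert (rho 2 <= RInt f 1 2).
      { replace (rho 2) with (RInt (fun _ => rho 2) 1 2).
        2:{ rewrite RInt_const. simpl. unfold scal; simpl; unfold mult; simpl. ring. }
        apply RInt_le. lra. apply exc. intros; apply cconst. apply exc. intros; apply fm_cont.
        intros x Hx. unfold f. pose proof (rho_mono x ltac:(lra)). pose proof (rho_pos x).
        destruct m as [|[|m]]; [| |lia]; simpl.
        - lra.
        - assert (1 <= x * (x * 1)) by nra.
          assert (1 * rho x <= x * (x * 1) * rho x) by (apply Rmult_le_compat_r; lra). lra. }
      assert (RInt f 1 2 <= RInt f (Ropp 2) 2) by (apply RInt_mono_int; auto; [intros; apply fm_cont|lra|lra|lra]).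
      pose proof (Hub 2 ltac:(lra)). pose proof (rho_pos 2). lra. }
    split; auto.
    destruct (Happ (l/2) ltac:(lra)) as [N [HN0 HN]].
    exists N. split; auto. intros b Hb. specialize (HN b Hb). lra.
Qed.

Lemma alpha_lb chi0 L m : chiOK chi0 -> 0 < L -> (m <= 1)%nat ->
  forall N, (forall b, N <= b -> Dm m / 2 < RInt (fun z => h m z ^ 2 * rho z) (-b) b) ->
  N <= L / 2 -> Dm m / 2 < Imod chi0 L m m.
Proof.
  intros Hc HL Hm N HN HNL.
  eapply Rlt_le_trans; [apply (HN (L/2) HNL)|].
  unfold Imod.
  rewrite (RInt_ext (fun z => h m z ^ 2 * rho z) (fun y => y ^ m * chi2 chi0 L y * h m y * rho y)).
  - apply RInt_mono_int; try lra.
    + intros; apply Im_cont; auto.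
    + intros y. pose proof (rho_pos y). pose proof (chi2_bnd chi0 L y Hc HL).
      destruct m as [|[|m]]; [| |lia]; simpl.
      * nra.
      * assert (0 <= y*y) by nra. assert (0 <= y*1*chi2 chi0 L y*y) by nra. nra.
  - intros x Hx. rewrite Rmin_left in Hx by lra. rewrite Rmax_right in Hx by lra.
    rewrite chi2_one; auto. 2:{ apply Rabs_le. lra. }
    destruct m as [|[|m]]; [| |lia]; simpl; ring.
Qed.

Lemma is_derive_eq (f : R -> R) x l l' : is_derive f x l -> l = l' -> is_derive f x l'.
Proof. intros H ->; auto. Qed.

Lemma psi_deriv chi0 K p A s0 d0 d1 Bd : chiOK chi0 -> 1 <= K * Rpower s0 (beta p) ->
  0 <= A / Rpower s0 (2 * beta p + 1) -> 0 <= Bd ->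
  (forall t, 0 < t -> Rabs (Derive chi0 t) <= Bd) ->
  Rabs d0 <= 2 -> Rabs d1 <= 2 ->
  forall y, exists dps, is_derive (psi chi0 K p A s0 d0 d1) y dps /\
     Rabs dps <= A / Rpower s0 (2 * beta p + 1) * (2 + 8 * Bd).
Proof.
  intros Hc HL HM HB0 HB Hd0 Hd1 y.
  set (L := K * Rpower s0 (beta p)) in *.
  set (M := A / Rpower s0 (2 * beta p + 1)) in *.
  destruct (cut_deriv chi0 L Bd Hc ltac:(lra) HB0 HB (2 * y)) as [d [Hd [Hdb Hdz]]].
  assert (Hchi: is_derive (chi2 chi0 L) y (2 * d)).
  { unfold chi2. apply (is_derive_eq _ _ (scal 2 d)).
    - apply (is_derive_comp (cut chi0 L) (fun y => 2 * y)); auto.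
      auto_derive; auto; ring.
    - reflexivity. }
  exists (M * d1 * chi2 chi0 L y + M * (d0 + d1 * y) * (2 * d)). split.
  - apply (is_derive_ext (fun y => M * (d0 + d1 * y) * chi2 chi0 L y)).
    { intros t. rewrite psi_eq. reflexivity. }
    apply (is_derive_eq _ _ (plus (mult (M * d1) (chi2 chi0 L y)) (mult (M * (d0 + d1 * y)) (2 * d)))).
    + apply (is_derive_mult (fun y => M * (d0 + d1 * y)) (chi2 chi0 L)); auto.
      * auto_derive; auto; ring.
      * intros; apply Rmult_comm.
    + reflexivity.
  - pose proof (chi2_bnd chi0 L y Hc ltac:(lra)) as Hb.
    assert (HLi: 0 < / L) by (apply Rinv_0_lt_compat; lra).
    eapply Rle_trans; [apply Rabs_triang|]. rewrite !Rabs_mult.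
    rewrite (Rabs_right M) by lra. rewrite (Rabs_right (chi2 _ _ _)) by lra. rewrite (Rabs_right 2) by lra.
    assert (T1: Rabs d1 * chi2 chi0 L y <= 2) by nra.
    assert (T2: Rabs (d0 + d1 * y) * (2 * Rabs d) <= 8 * Bd).
    { destruct (Rle_or_lt (Rabs y) L).
      - assert (Rabs (d0 + d1 * y) <= 2 + 2 * L).
        { eapply Rle_trans; [apply Rabs_triang|]. rewrite Rabs_mult. pose proof (Rabs_pos y). pose proof (Rabs_pos d1). nra. }
        assert (Rabs d * L <= Bd).
        { apply (Rmult_le_compat_r L) in Hdb; [|lra]. unfold Rdiv in Hdb. rewrite Rmult_assoc, Rinv_l in Hdb by lra. lra. }
        pose proof (Rabs_pos d). pose proof (Rabs_pos (d0 + d1 * y)).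
        assert (Rabs (d0 + d1 * y) * (2 * Rabs d) <= (2 + 2 * L) * (2 * Rabs d)) by nra.
        nra.
      - rewrite Hdz. rewrite Rabs_R0. nra. rewrite Rabs_mult, Rabs_right by lra. lra. }
    pose proof (Rabs_pos d1). pose proof (Rabs_pos (d0 + d1 * y)). pose proof (Rabs_pos d).
    nra.
Qed.

Lemma Rpower_pos x y : 0 < Rpower x y.
Proof. unfold Rpower. apply exp_pos. Qed.

Lemma Rpower_big s X e : 0 < X -> 0 < e -> Rpower X (/ e) <= s -> X <= Rpower s e.
Proof.
  intros HX He Hs.
  assert (X = Rpower (Rpower X (/ e)) e) as ->.
  { rewrite Rpower_mult. rewrite Rinv_l by lra. rewrite Rpower_1; auto. }
  apply Rle_Rpower_l. lra. split; auto. apply Rpower_pos.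
Qed.

Lemma beta_facts p : 3 < p -> 0 < beta p < 1.
Proof.
  intros Hp. unfold beta. split.
  - apply Rdiv_lt_0_compat; lra.
  - apply (Rmult_lt_reg_r (2 * (p - 1))); [lra|]. unfold Rdiv. rewrite Rmult_assoc, Rinv_l by lra. lra.
Qed.

Lemma pow_helpers y : Rabs y <= 1 + Rabs y ^ 3 /\ y ^ 2 <= 1 + Rabs y ^ 3 /\ 1 <= 1 + Rabs y ^ 3.
Proof.
  pose proof (Rabs_pos y) as H0.
  assert (E: y ^ 2 = Rabs y ^ 2) by (rewrite RPow_abs; rewrite Rabs_right; [auto|apply Rle_ge, pow2_ge_0]).
  rewrite E. set (t := Rabs y) in *. simpl.
  assert (0 <= t*t) by nra. assert (0 <= t*(t*t)) by nra.
  destruct (Rle_or_lt t 1).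
  - repeat split; nra.
  - assert (t <= t * t) by nra. assert (t * t <= t * (t * t)) by nra.
    repeat split; nra.
Qed.

Lemma scale_bound M a d : 0 < M -> 0 < a -> -/a <= d <= /a -> -M <= M * a * d <= M.
Proof.
  intros HM Ha [H1 H2].
  assert (H3: a * (-/a) <= a * d) by (apply Rmult_le_compat_l; lra).
  assert (H4: a * d <= a * /a) by (apply Rmult_le_compat_l; lra).
  replace (a * - / a) with (-1) in H3 by (field; lra).
  replace (a * / a) with 1 in H4 by (field; lra).
  replace (M * a * d) with (M * (a * d)) by ring.
  split; nra.
Qed.

Theorem proposition4p4 :
  forall (p mu K : R) (chi0 : R -> R),
    3 < p -> 0 < mu -> 6 <= K ->
    (forall n t, 0 < t -> ex_derive_n chi0 n t) ->
    (forall t, 0 <= t -> 0 <= chi0 t <= 1) ->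
    (forall t1 t2, 0 <= t1 -> t1 <= t2 -> chi0 t2 <= chi0 t1) ->
    (forall t, 0 <= t <= 1 -> chi0 t = 1) ->
    (forall t, 2 < t -> chi0 t = 0) ->
  exists C : R, 0 < C /\
  forall gamma : R,
    3 * beta p < gamma -> gamma < Rmin (5 * beta p - 1) (2 * beta p + 1) ->
  forall A : R, 1 <= A ->
  exists s03 : R, 1 < s03 /\
  forall s0 : R, s03 <= s0 ->
  let M := A / Rpower s0 (2 * beta p + 1) in
  let Ph := Phi chi0 K p A s0 in
  exists a0 b0 a1 b1 : R,
    -2 <= a0 <= b0 /\ b0 <= 2 /\ -2 <= a1 <= b1 /\ b1 <= 2 /\
    (* (i) *)
    (forall d, in_rect a0 b0 a1 b1 d -> in_rect (-M) M (-M) M (Ph d)) /\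
    (forall x, in_rect (-M) M (-M) M x ->
       exists d, in_rect a0 b0 a1 b1 d /\ Ph d = x) /\
    (forall d d', in_rect a0 b0 a1 b1 d -> in_rect a0 b0 a1 b1 d' ->
       Ph d = Ph d' -> d = d') /\
    (forall d, on_rect_boundary a0 b0 a1 b1 d ->
       on_rect_boundary (-M) M (-M) M (Ph d)) /\
    0 < linear2_det Ph /\
    (forall d0 d1, in_rect a0 b0 a1 b1 (d0, d1) ->
      let ps := psi chi0 K p A s0 d0 d1 in
      (* (ii) *)
      (forall y, r_e chi0 K p s0 ps y = 0) /\
      (forall y, Rabs (r_minus chi0 K p s0 ps y)
                   < Rpower s0 (- gamma) * (1 + Rabs y ^ 3)) /\
      Rabs (r_mode chi0 K p s0 ps 0) <= M /\
      Rabs (r_mode chi0 K p s0 ps 1) <= M /\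
      Rabs (r_mode chi0 K p s0 ps 2) < Rpower s0 (- (4 * beta p - 1)) /\
      in_vartheta chi0 K p gamma A s0 ps /\
      (* (iii) *)
      (forall y, Rabs (Derive ps y) <= C * A / Rpower s0 (2 * beta p + 1)) /\
      C * A / Rpower s0 (2 * beta p + 1) <= Rpower s0 (- (gamma - 3 * beta p)) /\
      (forall y, Rabs (Derive (r_minus chi0 K p s0 ps) y)
                   <= Rpower s0 (- gamma) * (1 + Rabs y ^ 3))).
Proof.
  intros p mu K chi0 Hp Hmu HK Hd Hb01 Hmono H1 H0.
  assert (Hc: chiOK chi0) by exact (conj Hd (conj Hb01 (conj H1 H0))).
  destruct (dchi0_bd chi0 Hc) as [Bd [HBd0 HBd]].
  set (C := 3 + 8 * Bd).
  exists C. split; [unfold C; lra|].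
  intros gamma Hg1 Hg2 A HA.
  pose proof (beta_facts p Hp) as Hbeta. set (be := beta p) in *.
  assert (Hg3: gamma < 2 * be + 1) by (eapply Rlt_le_trans; [apply Hg2|apply Rmin_r]).
  destruct (D_facts 0 ltac:(lia)) as [HD0 [N0 [HN0 HN0']]].
  destruct (D_facts 1 ltac:(lia)) as [HD1 [N1 [HN1 HN1']]].
  set (E2 := Rabs (/ Dm 2) * (4 * 3456 * PI)).
  assert (HE2: 0 <= E2) by (unfold E2; pose proof PI_RGT_0; pose proof (Rabs_pos (/ Dm 2)); nra).
  set (G := 2 * C + 5 * E2 + 10).
  set (de := 2 * be + 1 - gamma).
  set (X := 2 * (N0 + N1 + 1)).
  assert (HGA: 0 < 2 * G * A) by (unfold G, C; nra).
  exists (Rmax (Rpower (2 * G * A) (/ de)) (Rpower X (/ be)) + 2).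
  split.
  { pose proof (Rmax_l (Rpower (2 * G * A) (/ de)) (Rpower X (/ be))). pose proof (Rpower_pos (2*G*A) (/de)). lra. }
  intros s0 Hs0 M Ph.
  assert (Hs0de: 2 * G * A <= Rpower s0 de).
  { apply Rpower_big; auto. unfold de; lra. pose proof (Rmax_l (Rpower (2 * G * A) (/ de)) (Rpower X (/ be))). lra. }
  assert (Hs0be: X <= Rpower s0 be).
  { apply Rpower_big; [unfold X; lra|lra|]. pose proof (Rmax_r (Rpower (2 * G * A) (/ de)) (Rpower X (/ be))). lra. }
  assert (Hs1: 2 <= s0).
  { pose proof (Rmax_l (Rpower (2 * G * A) (/ de)) (Rpower X (/ be))). pose proof (Rpower_pos (2*G*A) (/de)). lra. }
  set (L := K * Rpower s0 be).
  assert (HL1: 1 <= L) by (unfold L, X in *; nra).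
  assert (HL0: 0 < L) by lra.
  assert (HLN0: N0 <= L / 2) by (unfold L, X in *; nra).
  assert (HLN1: N1 <= L / 2) by (unfold L, X in *; nra).
  assert (HR: 0 < Rpower s0 (2*be+1)) by apply Rpower_pos.
  assert (HM: 0 < M) by (unfold M; apply Rdiv_lt_0_compat; lra).
  assert (Hkey: 2 * G * M <= Rpower s0 (-gamma)).
  { assert (E: Rpower s0 (2*be+1) = Rpower s0 gamma * Rpower s0 de).
    { rewrite <- Rpower_plus. f_equal. unfold de. ring. }
    unfold M. rewrite E, Rpower_Ropp.
    pose proof (Rpower_pos s0 gamma). pose proof (Rpower_pos s0 de).
    replace (2 * G * (A / (Rpower s0 gamma * Rpower s0 de))) with ((2 * G * A) * / Rpower s0 de * / Rpower s0 gamma) by (field; lra).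
    rewrite <- (Rmult_1_l (/ Rpower s0 gamma)) at 2. apply Rmult_le_compat_r. left; apply Rinv_0_lt_compat; lra.
    apply (Rmult_le_reg_r (Rpower s0 de)); auto. rewrite Rmult_assoc, Rinv_l by lra. lra. }
  assert (Hg4: Rpower s0 (-gamma) <= Rpower s0 (-(4*be-1))) by (apply Rle_Rpower; lra).
  assert (Hg5: Rpower s0 (-gamma) <= Rpower s0 (-(gamma - 3*be))) by (apply Rle_Rpower; lra).
  assert (HMeq: A * Rpower s0 (-(2*be+1)) = M) by (rewrite Rpower_Ropp; unfold M; unfold Rdiv; auto).
  set (al0 := Imod chi0 L 0 0 / Dm 0).
  set (al1 := Imod chi0 L 1 1 / Dm 1).
  assert (Hal0: 1/2 < al0).
  { pose proof (alpha_lb chi0 L 0 Hc HL0 ltac:(lia) N0 HN0' HLN0). unfold al0.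
    apply (Rmult_lt_reg_r (Dm 0)); auto. replace (Imod chi0 L 0 0 / Dm 0 * Dm 0) with (Imod chi0 L 0 0) by (field; lra). lra. }
  assert (Hal1: 1/2 < al1).
  { pose proof (alpha_lb chi0 L 1 Hc HL0 ltac:(lia) N1 HN1' HLN1). unfold al1.
    apply (Rmult_lt_reg_r (Dm 1)); auto. replace (Imod chi0 L 1 1 / Dm 1 * Dm 1) with (Imod chi0 L 1 1) by (field; lra). lra. }
  assert (Hm0: forall d0 d1, r_mode chi0 K p s0 (psi chi0 K p A s0 d0 d1) 0 = M * al0 * d0).
  { intros d0 d1. rewrite mode_formula by auto. fold be L. rewrite (I01 chi0 L Hc HL0).
    unfold al0, M. unfold Rdiv. ring. }
  assert (Hm1: forall d0 d1, r_mode chi0 K p s0 (psi chi0 K p A s0 d0 d1) 1 = M * al1 * d1).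
  { intros d0 d1. rewrite mode_formula by auto. fold be L. rewrite (I10 chi0 L Hc HL0).
    unfold al1, M. unfold Rdiv. ring. }
  assert (Hm2: forall d0 d1, Rabs d0 <= 2 -> Rabs d1 <= 2 ->
            Rabs (r_mode chi0 K p s0 (psi chi0 K p A s0 d0 d1) 2) <= M * E2).
  { intros d0 d1 Hd0 Hd1. rewrite mode_formula by auto. fold be L. fold M.
    pose proof (I2_bd chi0 L 0 Hc HL0 ltac:(lia)). pose proof (I2_bd chi0 L 1 Hc HL0 ltac:(lia)).
    rewrite !Rabs_mult, (Rabs_right M) by lra. unfold E2.
    pose proof (Rabs_pos (/ Dm 2)).
    assert (Rabs (d0 * Imod chi0 L 2 0 + d1 * Imod chi0 L 2 1) <= 4 * 3456 * PI).
    { eapply Rle_trans; [apply Rabs_triang|]. rewrite !Rabs_mult.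
      pose proof (Rabs_pos d0). pose proof (Rabs_pos d1).
      pose proof (Rabs_pos (Imod chi0 L 2 0)). pose proof (Rabs_pos (Imod chi0 L 2 1)). nra. }
    assert (0 <= M * Rabs (/ Dm 2)) by nra. nra. }
  assert (HPh: forall d, Ph d = (M * al0 * fst d, M * al1 * snd d)).
  { intros [d0 d1]. unfold Ph, Phi. simpl. rewrite Hm0, Hm1. reflexivity. }
  assert (Hal0i: al0 * / al0 = 1) by (field; lra).
  assert (Hal1i: al1 * / al1 = 1) by (field; lra).
  assert (Hi0: 0 < / al0) by (apply Rinv_0_lt_compat; lra).
  assert (Hi1: 0 < / al1) by (apply Rinv_0_lt_compat; lra).
  assert (Hi0b: / al0 <= 2) by nra.
  assert (Hi1b: / al1 <= 2) by nra.
  exists (- / al0), (/ al0), (- / al1), (/ al1).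
  assert (Himg: forall d, in_rect (- / al0) (/ al0) (- / al1) (/ al1) d -> in_rect (-M) M (-M) M (Ph d)).
  { intros [d0 d1] [Hd0 Hd1]. rewrite HPh. unfold in_rect; simpl in *.
    split; apply scale_bound; auto; lra. }
  split; [lra|]. split; [lra|]. split; [lra|]. split; [lra|].
  split; [exact Himg|].
  split.
  { intros [x0 x1] [Hx0 Hx1]. simpl in Hx0, Hx1.
    exists (x0 / (M * al0), x1 / (M * al1)). split.
    - unfold in_rect; simpl. split.
      + split.
        * apply (Rmult_le_reg_l (M * al0)); [nra|]. replace (M * al0 * (x0 / (M * al0))) with x0 by (field; lra).
          replace (M * al0 * - / al0) with (- M) by (field; lra). lra.
        * apply (Rmult_le_reg_l (M * al0)); [nra|]. replace (M * al0 * (x0 / (M * al0))) with x0 by (field; lra).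
          replace (M * al0 * / al0) with M by (field; lra). lra.
      + split.
        * apply (Rmult_le_reg_l (M * al1)); [nra|]. replace (M * al1 * (x1 / (M * al1))) with x1 by (field; lra).
          replace (M * al1 * - / al1) with (- M) by (field; lra). lra.
        * apply (Rmult_le_reg_l (M * al1)); [nra|]. replace (M * al1 * (x1 / (M * al1))) with x1 by (field; lra).
          replace (M * al1 * / al1) with M by (field; lra). lra.
    - rewrite HPh. simpl. f_equal; field; lra. }
  split.
  { intros [d0 d1] [e0 e1] _ _ Heq. rewrite !HPh in Heq. simpl in Heq.
    injection Heq. intros E1 E0. f_equal.
    - apply (Rmult_eq_reg_l (M * al0)); auto. nra.
    - apply (Rmult_eq_reg_l (M * al1)); auto. nra. }
  split.
  { intros [d0 d1] [Hin Hbd]. split; [apply Himg; auto|].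
    rewrite HPh. simpl in *.
    destruct Hbd as [E|[E|[E|E]]]; rewrite E.
    - left. field. lra.
    - right; left. field. lra.
    - right; right; left. field. lra.
    - right; right; right. field. lra. }
  split.
  { unfold linear2_det. rewrite !HPh. simpl. replace (M * al0 * 1 * (M * al1 * 1) - M * al0 * 0 * (M * al1 * 0)) with ((M * al0) * (M * al1)) by ring. apply Rmult_lt_0_compat; nra. }
  intros d0 d1 Hin ps.
  destruct Hin as [Hd0 Hd1]. simpl in Hd0, Hd1.
  assert (Hd0a: Rabs d0 <= 2) by (apply Rabs_le; lra).
  assert (Hd1a: Rabs d1 <= 2) by (apply Rabs_le; lra).
  set (q0 := r_mode chi0 K p s0 ps 0).
  set (q1 := r_mode chi0 K p s0 ps 1).
  set (q2 := r_mode chi0 K p s0 ps 2).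
  assert (Hq0: Rabs q0 <= M).
  { unfold q0, ps. rewrite Hm0. apply Rabs_le. apply scale_bound; auto; lra. }
  assert (Hq1: Rabs q1 <= M).
  { unfold q1, ps. rewrite Hm1. apply Rabs_le. apply scale_bound; auto; lra. }
  assert (Hq2: Rabs q2 <= M * E2) by (unfold q2, ps; apply Hm2; auto).
  assert (Hgpos: 0 < Rpower s0 (-gamma)) by apply Rpower_pos.
  assert (HRM: forall y, r_minus chi0 K p s0 ps y = ps y - (q0 + q1 * y + q2 * (y^2 - 2))).
  { intros y. unfold r_minus. unfold ps. rewrite rb_eq by auto. fold ps. fold q0 q1 q2. simpl. ring. }
  assert (Hps: forall y, Rabs (ps y) <= M * (2 + 2 * Rabs y)).
  { intros y. unfold ps. rewrite psi_eq. fold be L M.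
    pose proof (chi2_bnd chi0 L y Hc HL0).
    rewrite !Rabs_mult, (Rabs_right M), (Rabs_right (chi2 _ _ _)) by lra.
    assert (Rabs (d0 + d1 * y) <= 2 + 2 * Rabs y).
    { eapply Rle_trans; [apply Rabs_triang|]. rewrite Rabs_mult. pose proof (Rabs_pos y). nra. }
    pose proof (Rabs_pos (d0 + d1 * y)).
    assert (Rabs (d0 + d1 * y) * chi2 chi0 L y <= 2 + 2 * Rabs y) by nra.
    rewrite Rmult_assoc. apply Rmult_le_compat_l; lra. }
  assert (Hder: forall y, exists dps, is_derive ps y dps /\ Rabs dps <= M * (2 + 8 * Bd)).
  { intros y. apply (psi_deriv chi0 K p A s0 d0 d1 Bd Hc HL1); auto. fold be M. lra. }
  assert (HGge: 6 + 3 * E2 <= G /\ C + 1 + 2 * E2 <= G /\ E2 <= G /\ C <= G /\ 2 + 8 * Bd <= C).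
  { unfold G, C. lra. }
  split; [intros y; apply re_zero; auto|].
  assert (Hii: forall y, Rabs (r_minus chi0 K p s0 ps y) < Rpower s0 (- gamma) * (1 + Rabs y ^ 3)).
  { intros y. rewrite HRM. destruct (pow_helpers y) as [P1 [P2 P3]].
    pose proof (Hps y).
    assert (Rabs (ps y - (q0 + q1 * y + q2 * (y ^ 2 - 2))) <= M * (6 + 3 * E2) * (1 + Rabs y ^ 3)).
    { eapply Rle_trans; [apply Rabs_triang|]. rewrite Rabs_Ropp.
      eapply Rle_trans; [apply Rplus_le_compat_l; apply Rabs_triang|].
      eapply Rle_trans; [apply Rplus_le_compat_l; apply Rplus_le_compat_r; apply Rabs_triang|].
      rewrite !Rabs_mult.
      assert (Rabs (y^2 - 2) <= y^2 + 2) by (apply Rabs_le; pose proof (pow2_ge_0 y); lra).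
      pose proof (Rabs_pos y). pose proof (Rabs_pos q1). pose proof (Rabs_pos q2).
      assert (Rabs q1 * Rabs y <= M * Rabs y) by nra.
      assert (Rabs q2 * Rabs (y^2 - 2) <= (M * E2) * (y^2 + 2)) by (apply Rmult_le_compat; try apply Rabs_pos; lra).
      nra. }
    assert (M * (6 + 3 * E2) < Rpower s0 (- gamma)) by nra.
    pose proof (Rabs_pos y). assert (0 < 1 + Rabs y ^ 3) by lra.
    nra. }
  assert (Hq2s: Rabs q2 < Rpower s0 (- (4 * be - 1))) by nra.
  split; [exact Hii|].
  split; [exact Hq0|].
  split; [exact Hq1|].
  split; [exact Hq2s|].
  split.
  { unfold in_vartheta. fold be q0 q1 q2. rewrite HMeq.
    split; [|split; [|split; [exact Hq0|split; [exact Hq1|]]]].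
    - intros y. rewrite (re_zero chi0 K p A s0 d0 d1 y Hc HL0 : r_e chi0 K p s0 ps y = 0). rewrite Rabs_R0.
      pose proof (Rpower_pos s0 (- (gamma - 3 * be))). assert (0 <= A^2) by nra. nra.
    - intros y. pose proof (Hii y). pose proof (Rabs_pos y). assert (0 < 1 + Rabs y ^ 3) by (pose proof (pow_helpers y); lra).
      apply (Rmult_le_reg_r (1 + Rabs y ^ 3)); auto.
      unfold Rdiv. rewrite Rmult_assoc, Rinv_l by lra. rewrite Rmult_1_r.
      assert (Rpower s0 (- gamma) <= A * Rpower s0 (- gamma)) by nra. nra.
    - assert (1 <= sqrt A) by (rewrite <- sqrt_1; apply sqrt_le_1_alt; lra).
      pose proof (Rpower_pos s0 (- (4 * be - 1))). nra. }
  assert (HCM: C * A / Rpower s0 (2 * be + 1) = C * M) by (unfold M; field; lra).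
  split.
  { intros y. destruct (Hder y) as [dps [Hdy Hb]].
    rewrite (is_derive_unique _ _ _ Hdy). rewrite HCM. nra. }
  split.
  { rewrite HCM. nra. }
  intros y. destruct (Hder y) as [dps [Hdy Hb]].
  rewrite (Derive_ext _ (fun t => ps t - (q0 + q1 * t + q2 * (t^2 - 2)))) by exact HRM.
  assert (Hgd: is_derive (fun t => q0 + q1 * t + q2 * (t^2 - 2)) y (q1 + q2 * (2 * y))).
  { auto_derive; auto. ring. }
  pose proof (is_derive_minus _ _ _ _ _ Hdy Hgd) as Hmin.
  assert (HD: Derive (fun t : R => ps t - (q0 + q1 * t + q2 * (t^2 - 2))) y = dps - (q1 + q2 * (2 * y))) by (apply is_derive_unique; exact Hmin). rewrite HD.
  destruct (pow_helpers y) as [P1 [P2 P3]].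
  assert (Rabs (dps - (q1 + q2 * (2 * y))) <= M * (C + 1 + 2 * E2) * (1 + Rabs y ^ 3)).
  { eapply Rle_trans; [apply Rabs_triang|]. rewrite Rabs_Ropp.
    eapply Rle_trans; [apply Rplus_le_compat_l; apply Rabs_triang|].
    rewrite !Rabs_mult, (Rabs_right 2) by lra.
    pose proof (Rabs_pos y). pose proof (Rabs_pos q2).
    assert (Rabs q2 * (2 * Rabs y) <= (M * E2) * (2 * Rabs y)) by (apply Rmult_le_compat_r; lra).
    set (T := 1 + Rabs y ^ 3) in *.
    assert (M * (2 + 8 * Bd) <= M * C * T).
    { assert (M * (2 + 8 * Bd) <= M * C) by (apply Rmult_le_compat_l; lra).
      assert (M * C * 1 <= M * C * T) by (apply Rmult_le_compat_l; nra). lra. }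
    assert (M * 1 <= M * T) by (apply Rmult_le_compat_l; lra).
    assert (M * E2 * (2 * Rabs y) <= M * E2 * (2 * T)) by (apply Rmult_le_compat_l; nra).
    replace (M * (C + 1 + 2 * E2) * T) with (M * C * T + M * T + M * E2 * (2 * T)) by ring.
    lra. }
  assert (M * (C + 1 + 2 * E2) <= Rpower s0 (- gamma)) by nra.
  eapply Rle_trans; [eassumption|]. apply Rmult_le_compat_r; lra.
Qed.
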